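(* For every topological space $X$, the simplicial set $S_*^M(X)$ is a Kan complex.
   Context: A continuous multivalued map $X\to Y$ is a subset $T\subset X\times Y$ such that the restriction of the projection $X\times Y\to X$ to $T$ is proper (universally closed), surjective and has finite fibers; $M(X,Y)$ is the set of these. For a continuous map $f:A\to B$ and $\alpha\in M(B,X)$, set $\alpha\circ\mathrm{gr}(f)=\{(a,x)\in A\times X:(f(a),x)\in\alpha\}\in M(A,X)$. Let $\Delta_n=\{(t_0,\dots,t_n)\in\mathbb{R}^{n+1}:t_i\ge 0,\sum t_i=1\}$ with the standard coface maps $\delta^n_i:\Delta_{n-1}\to\Delta_n$ (inserting $0$ in position $i$) and codegeneracy maps $\sigma^n_i:\Delta_{n+1}\to\Delta_n$ (adding coordinates $i$ and $i+1$). $S_*^M(X)$ is the simplicial set with $S_n^M(X)=M(\Delta_n,X)$, face maps $\alpha\mapsto\alpha\circ\mathrm{gr}(\delta^n_i)$ and degeneracy maps $\alpha\mapsto\alpha\circ\mathrm{gr}(\sigma^n_i)$. *)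

(* Defs.v *)
From HB Require Import structures.
From mathcomp Require Import all_boot all_order all_algebra.
From mathcomp Require Import all_classical all_reals.
From mathcomp Require Import topology.
From mathcomp Require Import Rstruct Rstruct_topology.
From Stdlib Require Import Rdefinitions.

Set Implicit Arguments.
Unset Strict Implicit.
Unset Printing Implicit Defensive.

Import Order.TTheory GRing.Theory Num.Theory.
Local Open Scope classical_set_scope.
Local Open Scope ring_scope.

Definition simplex_set (n : nat) : set 'rV[R]_(n.+1) :=
  [set t | (forall i, 0 <= t ord0 i) /\ \sum_i t ord0 i = 1].

Arguments simplex_set n : clear implicits.

(** Δ_n as a topological space (subspace topology, via the initial topology
    of the inclusion into R^{n+1} with its product topology). *)
Definition Delta (n : nat) : topologicalType := set_type (simplex_set n).

(** Insert a 0 in position i : the raw vector map underlying δ^{n+1}_i. *)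
Definition coface_vec (m : nat) (i : 'I_(m.+2)) (v : 'rV[R]_(m.+1))
  : 'rV[R]_(m.+2) :=
  \row_j match unlift i j with None => 0 | Some j' => v ord0 j' end.

Lemma coface_vec_simplex m (i : 'I_(m.+2)) (v : 'rV[R]_(m.+1)) :
  simplex_set m v -> simplex_set m.+1 (coface_vec i v).
Proof.
case=> v0 v1; split.
  by move=> j; rewrite mxE; case: unliftP => [j' _|_] //.
rewrite (bigD1 i) //= mxE unlift_none add0r -v1.
rewrite (reindex_onto (lift i) (odflt ord0 \o unlift i)) /=.
  apply: eq_big => [j|j _]; first by rewrite liftK eqxx eq_sym neq_lift.
  by rewrite mxE liftK.
by move=> j ji; case: unliftP ji => [j' ->|->] //; rewrite eqxx.
Qed.

Definition coface (m : nat) (i : 'I_(m.+2)) (t : Delta m) : Delta m.+1 :=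
  exist _ (coface_vec i (val t))
    (mem_set (coface_vec_simplex i (set_mem (valP t)))).

(** Universal closedness of the projection T → A (T ⊂ A × X carrying the
    subspace topology of A × X): for every space Z, the map
    T × Z → A × Z, ((a,x),z) ↦ (a,z) is closed.  A closed subset of T × Z
    is the trace (T × Z) ∩ D of a closed D ⊂ (A × X) × Z. *)
Definition universally_closed_proj {A X : topologicalType}
    (T : set (A * X)) : Prop :=
  forall (Z : topologicalType) (D : set ((A * X) * Z)), closed D ->
    closed [set p : A * Z | exists x : X, T (p.1, x) /\ D ((p.1, x), p.2)].

Definition is_mvmap {A X : topologicalType} (T : set (A * X)) : Prop :=
  [/\ universally_closed_proj T,
      (forall a : A, exists x : X, T (a, x)) &
      (forall a : A, finite_set [set x : X | T (a, x)])].

Definition comp_gr {A B X : Type} (alpha : set (B * X)) (f : A -> B)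
  : set (A * X) := [set p | alpha (f p.1, p.2)].

Definition SM (X : topologicalType) (n : nat) : set (set (Delta n * X)) :=
  [set T | is_mvmap T].

Arguments SM X n : clear implicits.

Definition SM_face (X : topologicalType) (m : nat) (i : 'I_(m.+2))
    (alpha : set (Delta m.+1 * X)) : set (Delta m * X) :=
  comp_gr alpha (@coface m i).

Arguments SM_face X m i alpha : clear implicits.

(** C n is an ambient type containing the n-simplices S n, and
    d m i : C (m+1) → C m is the i-th face map.  The Kan condition: every
    horn Λ^{n}_k → S (n ≥ 1, 0 ≤ k ≤ n), i.e. every family (y_i)_{i ≠ k}
    of (n-1)-simplices with d_i y_j = d_{j-1} y_i for i < j, i,j ≠ k,
    has a filler x ∈ S_n with d_i x = y_i for all i ≠ k.
    The case n = 1 (no compatibility) and the cases n = m+2 are stated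
    separately to avoid dependent-type index arithmetic. *)

Definition Kan_condition (C : nat -> Type) (S : forall n, set (C n))
    (d : forall m, 'I_(m.+2) -> C m.+1 -> C m) : Prop :=
  (forall (k : 'I_2) (y : 'I_2 -> C 0),
     (forall i, i != k -> S 0 (y i)) ->
     exists x, S 1 x /\ forall i, i != k -> d 0 i x = y i) /\
  (forall (m : nat) (k : 'I_(m.+3)) (y : 'I_(m.+3) -> C m.+1),
     (forall i, i != k -> S m.+1 (y i)) ->
     (forall i j : 'I_(m.+3), ltn i j -> i != k -> j != k ->
        d m (inord (nat_of_ord i)) (y j) = d m (inord (nat_of_ord j).-1) (y i)) ->
     exists x, S m.+2 x /\ forall i, i != k -> d m.+1 i x = y i).

Definition SM_is_Kan (X : topologicalType) : Prop :=
  Kan_condition (SM X) (@SM_face X).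

(* Main.v *)
Require Import Defs.
From HB Require Import structures.
From mathcomp Require Import all_boot all_order all_algebra.
From mathcomp Require Import all_classical all_reals.
From mathcomp Require Import topology normedtype.
From mathcomp Require Import Rstruct Rstruct_topology.
From Stdlib Require Import Rdefinitions.
From mathcomp Require Import zify lra.
Set Implicit Arguments. Unset Strict Implicit. Unset Printing Implicit Defensive.
Import Order.TTheory GRing.Theory Num.Theory.
Local Open Scope classical_set_scope.
Local Open Scope ring_scope.
Lemma pair_cont {T U V : topologicalType} (f : T -> U) (g : T -> V) :
  continuous f -> continuous g -> continuous (fun x => (f x, g x)).
Proof. by move=> cf cg x; apply: cvg_pair; [exact: cf|exact: cg]. Qed.

Lemma fst_cont {U V : topologicalType} : continuous (@fst U V).
Proof. by move=> x; exact: cvg_fst. Qed.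
Lemma snd_cont {U V : topologicalType} : continuous (@snd U V).
Proof. by move=> x; exact: cvg_snd. Qed.
Lemma comp_cont {T U V : topologicalType} (f : T -> U) (g : U -> V) :
  continuous f -> continuous g -> continuous (fun x => g (f x)).
Proof. by move=> cf cg x; apply: continuous_comp; [exact: cf|exact: cg]. Qed.

Lemma closed_pre {T U : topologicalType} (f : T -> U) (A : set U) :
  continuous f -> closed A -> closed (f @^-1` A).
Proof. by move=> cf cA; exact: (proj1 (continuous_closedP _) cf _ cA). Qed.

Lemma uc_comp {A B X : topologicalType} (y : set (B * X)) (f : A -> B) :
  continuous f -> universally_closed_proj y ->
  universally_closed_proj (comp_gr y f).
Proof.
move=> cf uy Z D cD.
pose D' := [set q : (B * X) * (A * Z) | D ((q.2.1, q.1.2), q.2.2)].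
have cD' : closed D'.
  apply: (closed_pre (f := fun q : (B * X) * (A * Z) => ((q.2.1, q.1.2), q.2.2))) cD.
  apply: pair_cont; last by apply: comp_cont; [exact: snd_cont|exact: snd_cont].
  apply: pair_cont; apply: comp_cont; try exact: fst_cont; exact: snd_cont.
have E := uy _ D' cD'.
have h2 : continuous (fun p : A * Z => (f p.1, p)).
  apply: (@pair_cont _ _ _ (fun p : A * Z => f p.1) (fun p => p)).
    exact: (comp_cont fst_cont cf).
  by move=> p.
have := closed_pre h2 E.
by [].
Qed.

Lemma uc_restrict {A X : topologicalType} (T : set (A * X)) (C : set A) :
  closed C -> universally_closed_proj T ->
  universally_closed_proj [set p | C p.1 /\ T p].
Proof.
move=> cC uT Z D cD.
have -> : [set p : A * Z | exists x : X, [set p | C p.1 /\ T p] (p.1, x) /\ D ((p.1, x), p.2)]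
  = (fst @^-1` C) `&` [set p : A * Z | exists x : X, T (p.1, x) /\ D ((p.1, x), p.2)].
  apply/seteqP; split => -[a z] /=.
    by case=> x [[Ca Tx] Dx]; split => //; exists x.
  by case=> Ca [x [Tx Dx]]; exists x.
apply: closedI; first exact: closed_pre fst_cont cC.
exact: uT.
Qed.

Lemma uc_bigcup {A X : topologicalType} (I : finType) (T : I -> set (A * X)) :
  (forall i, universally_closed_proj (T i)) ->
  universally_closed_proj [set p | exists i, T i p].
Proof.
move=> uT Z D cD.
have -> : [set p : A * Z | exists x : X, [set p | exists i, T i p] (p.1, x) /\ D ((p.1, x), p.2)]
  = \bigcup_(i in [set: I]) [set p : A * Z | exists x : X, T i (p.1, x) /\ D ((p.1, x), p.2)].
  apply/seteqP; split => -[a z] /=.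
    by case=> x [[i Tx] Dx]; exists i => //; exists x.
  by case=> i _ [x [Tx Dx]]; exists x; split => //; exists i.
apply: closed_bigcup; first exact: finite_finset.
by move=> i _; exact: uT.
Qed.
Lemma mx_coord_cont (T : topologicalType) m n (i : 'I_m) (j : 'I_n) :
  continuous (fun M : 'M[T]_(m, n) => M i j).
Proof.
move=> M B /= BM. rewrite /nbhs /=.
exists (fun i' j' => if (i' == i) && (j' == j) then B else setT).
  move=> i' j'; case: ifP => [/andP[/eqP-> /eqP->] //|_].
  exact: filterT.
by move=> N /= /(_ i j); rewrite !eqxx.
Qed.

Lemma mx_cont (Y : topologicalType) (T : topologicalType) m n
  (h : Y -> 'M[T]_(m, n)) :
  (forall i j, continuous (fun y => h y i j)) -> continuous h.
Proof.
move=> ch y A [P /= PN sPA].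
have : \forall z \near y, forall i, forall j, P i j (h z i j).
  apply: filter_forall => i; apply: filter_forall => j.
  exact: (ch i j y _ (PN i j)).
by apply: filterS => z Pz; apply: sPA.
Qed.

Lemma Delta_val_cont n : continuous (fun t : Delta n => val t).
Proof. exact: initial_continuous. Qed.

Lemma cont_coord n j : continuous (fun t : Delta n => val t ord0 j).
Proof. move=> t; apply: (@continuous_comp _ _ _ (fun t : Delta n => val t) (fun M : 'rV[R]_(n.+1) => M ord0 j)); [exact: Delta_val_cont | exact: mx_coord_cont]. Qed.

Lemma cont_to_Delta (Y : topologicalType) n (g : Y -> Delta n) :
  (forall j, continuous (fun y => val (g y) ord0 j)) -> continuous g.
Proof.
move=> cg.
have h : continuous (fun y => (val (g y) : 'rV[R]_(n.+1))).
  by apply: mx_cont => i j; rewrite (ord1 i); exact: cg.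
apply/continuousP => A [V oV <-].
have := (continuousP (fun y => \val (g y))).1 h V oV. by rewrite set_valE.
Qed.
Definition Pvec n (i : 'I_(n.+2)) (t : 'rV[R]_(n.+2)) : 'rV[R]_(n.+1) :=
  \row_j (t ord0 (lift i j) + (if j == ord0 then t ord0 i else 0)).

Lemma sum_lift n (i : 'I_(n.+2)) (t : 'rV[R]_(n.+2)) :
  \sum_k t ord0 k = t ord0 i + \sum_(j < n.+1) t ord0 (lift i j).
Proof. by rewrite (bigD1_ord i) //=. Qed.

Lemma Pvec_simplex n (i : 'I_(n.+2)) t :
  simplex_set n.+1 t -> simplex_set n (Pvec i t).
Proof.
case=> t0 t1; split.
  move=> j; rewrite mxE; apply: addr_ge0 => //; case: ifP => //.
rewrite -t1 (sum_lift i) addrC.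
under eq_bigr do rewrite mxE.
rewrite big_split /=; congr (_ + _).
rewrite -big_mkcond /= (big_pred1_eq _ ord0) //.
Qed.

Definition P n (i : 'I_(n.+2)) (t : Delta n.+1) : Delta n :=
  exist _ (Pvec i (val t)) (mem_set (Pvec_simplex i (set_mem (valP t)))).

Lemma coface_P n (i : 'I_(n.+2)) (t : Delta n.+1) :
  val t ord0 i = 0 -> coface i (P i t) = t.
Proof.
move=> ti; apply: val_inj => /=; apply/rowP => j.
rewrite /coface_vec !mxE; case: unliftP => [j' ->|->] //.
by rewrite mxE ti; case: ifP => _; rewrite addr0.
Qed.

Lemma P_coface n (i : 'I_(n.+2)) (s : Delta n) : P i (coface i s) = s.
Proof.
apply: val_inj => /=; apply/rowP => j.
by rewrite /Pvec /coface_vec !mxE liftK unlift_none if_same addr0.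
Qed.

Lemma coface_at n (i : 'I_(n.+2)) (s : Delta n) : val (coface i s) ord0 i = 0.
Proof. by rewrite /= /coface_vec mxE unlift_none. Qed.

Lemma bump_comm (i i' l : nat) : leq i.+1 i' ->
  bump i' (bump i l) = bump i (bump i'.-1 l).
Proof.
rewrite /bump => lt; case: (ssrnat.leqP i l) => h1; case: (ssrnat.leqP i'.-1 l) => h2;
  case: (ssrnat.leqP i' _) => h3; case: (ssrnat.leqP i _) => h4 //=; rewrite ?add0n ?add1n in h3 h4 *; lia.
Qed.

Lemma lift_inord_lt m (i i' : 'I_(m.+3)) : leq i.+1 i' ->
  lift i' (inord i : 'I_(m.+2)) = i.
Proof.
move=> lt; apply: val_inj => /=.
have hi : leq i.+1 m.+2 by move: (ltn_ord i') => ?; lia.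
rewrite inordK // /bump; case: (ssrnat.leqP i' i) => h //=; lia.
Qed.

Lemma lift_inord_pred m (i i' : 'I_(m.+3)) : leq i.+1 i' ->
  lift i (inord i'.-1 : 'I_(m.+2)) = i'.
Proof.
move=> lt; apply: val_inj => /=.
have hi : leq i'.-1.+1 m.+2 by move: (ltn_ord i') => ?; lia.
rewrite inordK // /bump; case: (ssrnat.leqP i i'.-1) => h //=; lia.
Qed.

Lemma PP_comm m (t : Delta m.+2) (i i' : 'I_(m.+3)) : leq i.+1 i' ->
  val t ord0 i = 0 -> val t ord0 i' = 0 ->
  P (inord i) (P i' t) = P (inord i'.-1) (P i t).
Proof.
move=> lt ti ti'; apply: val_inj => /=; apply/rowP => l.
rewrite /Pvec !mxE (lift_inord_lt lt) (lift_inord_pred lt) ti ti' !if_same !addr0.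
rewrite if_same !addr0.
congr (sval t ord0 _); apply: val_inj => /=.
have hi : leq i.+1 m.+2 by move: (ltn_ord i') => ?; lia.
have hi' : leq i'.-1.+1 m.+2 by move: (ltn_ord i') => ?; lia.
rewrite !inordK //; exact: bump_comm.
Qed.

Definition oth n (k : 'I_(n.+2)) : 'I_(n.+2) := if k == ord0 then ord_max else ord0.

Lemma oth_neq n (k : 'I_(n.+2)) : oth k != k.
Proof. rewrite /oth; case: (k =P ord0) => [->|/eqP h]; last by rewrite eq_sym. by apply/eqP => /(congr1 val). Qed.

Definition muf_s n (k i0 : 'I_n) (t : 'rV[R]_n) (s : seq 'I_n) : R :=
  foldr (fun i acc => if i == k then acc else Order.min (t ord0 i) acc) (t ord0 i0) s.

Definition muf n (k : 'I_(n.+2)) (t : 'rV[R]_(n.+2)) : R :=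
  muf_s k (oth k) t (enum 'I_(n.+2)).

Lemma muf_s_le n (k i0 : 'I_n) t s i : i \in s -> i != k -> muf_s k i0 t s <= t ord0 i.
Proof.
elim: s => //= a s IH; rewrite in_cons => /orP [/eqP <-|iin] ik.
  by rewrite (negbTE ik) ge_min lexx.
case: ifP => _; first exact: IH.
by rewrite ge_min IH // orbT.
Qed.

Lemma muf_s_att n (k i0 : 'I_n) t s : i0 != k ->
  exists i, i != k /\ muf_s k i0 t s = t ord0 i.
Proof.
move=> i0k; elim: s => [|a s [j [jk IH]]] /=; first by exists i0.
case: ifP => ak; first by exists j.
rewrite IH; case: (leP (t ord0 a) (t ord0 j)) => h.
  by exists a; rewrite ak.
by exists j.
Qed.

Lemma muf_le n (k : 'I_(n.+2)) t i : i != k -> muf k t <= t ord0 i.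
Proof. by move=> ik; apply: muf_s_le => //; rewrite mem_enum. Qed.

Lemma muf_att n (k : 'I_(n.+2)) t : exists i, i != k /\ muf k t = t ord0 i.
Proof. exact: muf_s_att (oth_neq k). Qed.

Definition rvec n (k : 'I_(n.+2)) (t : 'rV[R]_(n.+2)) : 'rV[R]_(n.+2) :=
  \row_j (t ord0 j - muf k t + (if j == k then (n.+2)%:R * muf k t else 0)).

Lemma rvec_simplex n (k : 'I_(n.+2)) t :
  simplex_set n.+1 t -> simplex_set n.+1 (rvec k t).
Proof.
case=> t0 t1.
have mu0 : 0 <= muf k t by have [i [_ ->]] := muf_att k t.
split.
  move=> j; rewrite mxE; case: eqP => [->|/eqP jk].
    have h1 : 1 <= (n.+2)%:R :> R by rewrite ler1n.
    have := t0 k; nra.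
  by rewrite addr0 subr_ge0 muf_le.
under eq_bigr do rewrite mxE.
rewrite big_split /= -big_mkcond /= (big_pred1_eq _ k) big_split /=.
rewrite t1 sumrN sumr_const card_ord -mulr_natl.
by rewrite mulr1 mulr_natl subrK.
Qed.

Definition retr n (k : 'I_(n.+2)) (t : Delta n.+1) : Delta n.+1 :=
  exist _ (rvec k (val t)) (mem_set (rvec_simplex k (set_mem (valP t)))).

Lemma Delta_ge0 n (t : Delta n) i : 0 <= val t ord0 i.
Proof. by case: (set_mem (valP t)) => h _; exact: h. Qed.

Lemma retr_ne n (k : 'I_(n.+2)) (t : Delta n.+1) i : i != k ->
  val (retr k t) ord0 i = val t ord0 i - muf k (val t).
Proof. by move=> ik; rewrite /= mxE (negbTE ik) addr0. Qed.

Lemma retr_att n (k : 'I_(n.+2)) (t : Delta n.+1) : exists i, i != k /\ val (retr k t) ord0 i = 0.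
Proof.
have [i [ik e]] := muf_att k (val t).
by exists i; split => //; rewrite retr_ne // e subrr.
Qed.

Lemma retr_id n (k : 'I_(n.+2)) (t : Delta n.+1) j : j != k -> val t ord0 j = 0 -> retr k t = t.
Proof.
move=> jk tj.
have mu0 : muf k (val t) = 0.
  apply/eqP; rewrite eq_le; apply/andP; split; first by rewrite -tj muf_le.
  by have [i [_ ->]] := muf_att k (val t); exact: Delta_ge0.
apply: val_inj => /=; apply/rowP => l.
by rewrite mxE mu0 subr0 mulr0 if_same addr0.
Qed.
Section C.
Variable Y : topologicalType.
Lemma add_cont (f g : Y -> R) : continuous f -> continuous g -> continuous (fun y => f y + g y).
Proof. move=> cf cg y. have := @continuousD _ R^o Y f g y (cf y) (cg y). exact. Qed.
Lemma opp_cont (f : Y -> R) : continuous f -> continuous (fun y => - f y).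
Proof. move=> cf y. have := @continuousN _ R^o Y f y (cf y). exact. Qed.
Lemma mulc_cont (c : R) (f : Y -> R) : continuous f -> continuous (fun y => c * f y).
Proof. move=> cf y. have := @continuousM R Y (fun _ => c) f y (cvg_cst c) (cf y). exact. Qed.
Lemma min_cont (f g : Y -> R) : continuous f -> continuous g -> continuous (fun y => Order.min (f y) (g y)).
Proof. move=> cf cg y. have := @continuous_min R Y f g y (cf y) (cg y). exact. Qed.
Lemma cst_cont (c : R) : continuous (fun _ : Y => c).
Proof. by move=> y; exact: cvg_cst. Qed.
End C.

Lemma P_cont n (i : 'I_(n.+2)) : continuous (@P n i).
Proof.
apply: cont_to_Delta => j.
have -> : (fun y : Delta n.+1 => val (P i y) ord0 j) =
  fun y => val y ord0 (lift i j) + (if j == ord0 then val y ord0 i else 0).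
  by apply/funext => y; rewrite /= mxE.
apply: add_cont; first exact: cont_coord.
case: (j == ord0); [exact: cont_coord|exact: cst_cont].
Qed.

Lemma muf_s_cont n (k i0 : 'I_(n.+2)) s :
  continuous (fun t : Delta n.+1 => muf_s k i0 (val t) s).
Proof.
elim: s => [|a s IH] /=; first exact: cont_coord.
case: (a == k) => //; apply: min_cont => //; exact: cont_coord.
Qed.

Lemma retr_cont n (k : 'I_(n.+2)) : continuous (@retr n k).
Proof.
apply: cont_to_Delta => j.
have -> : (fun y : Delta n.+1 => val (retr k y) ord0 j) =
  fun y => val y ord0 j + - muf k (val y) +
    (if j == k then (n.+2)%:R * muf k (val y) else 0).
  by apply/funext => y; rewrite /= mxE.
have cm : continuous (fun y : Delta n.+1 => muf k (val y)) by exact: muf_s_cont.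
apply: add_cont; first by apply: add_cont; [exact: cont_coord|exact: opp_cont].
case: (j == k); [exact: mulc_cont|exact: cst_cont].
Qed.

Lemma uc_set0 {A X : topologicalType} : universally_closed_proj (@set0 (A * X)).
Proof.
move=> Z D _.
have -> : [set p : A * Z | exists x : X, (@set0 (A * X)) (p.1, x) /\ D ((p.1, x), p.2)] = set0.
  by apply/seteqP; split => // p [x []].
exact: closed0.
Qed.

Lemma uc_eq {A X : topologicalType} (T1 T2 : set (A * X)) :
  (forall p, T1 p <-> T2 p) -> universally_closed_proj T2 -> universally_closed_proj T1.
Proof.
move=> h; have -> // : T1 = T2.
by apply/funext => p; apply/propext; exact: h.
Qed.

Lemma I2_eq (a b c : 'I_2) : a != c -> b != c -> a = b.
Proof.
move=> ac bc; apply: val_inj; move: ac bc; rewrite -!(inj_eq val_inj) /=.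
case: a => [[|[|a]] Ha] //; case: b => [[|[|b]] Hb] //; case: c => [[|[|c]] Hc] //=.
Qed.

Lemma Delta0_uniq (a b : Delta 0) : a = b.
Proof.
have h (c : Delta 0) : val c ord0 ord0 = 1.
  by case: (set_mem (valP c)) => _; rewrite big_ord1.
by apply: val_inj; apply/rowP => j; rewrite (ord1 j) !h.
Qed.

Theorem mainTheorem8 : forall X : topologicalType, SM_is_Kan X.
Proof.
move=> X; split.
  move=> k y Sy.
  have [uc sur fin] := Sy _ (oth_neq k).
  exists (comp_gr (y (oth k)) (@P 0 ord0)); split.
    split.
    - apply: uc_comp uc; exact: (@P_cont 0 ord0).
    - by move=> a; exact: sur (P ord0 a).
    - by move=> a; exact: fin (P ord0 a).
  move=> i ik; rewrite (I2_eq ik (oth_neq k)).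
  apply/funext => -[s z]; rewrite /SM_face /comp_gr /=.
  by rewrite (Delta0_uniq (P ord0 (coface (oth k) s)) s).
move=> m k y Sy compat.
have key : forall (t : Delta m.+2) (i i' : 'I_(m.+3)) z, leq i.+1 i' ->
    i != k -> i' != k -> val t ord0 i = 0 -> val t ord0 i' = 0 ->
    y i (P i t, z) = y i' (P i' t, z).
  move=> t i i' z lt ik i'k ti ti'.
  have := compat i i' lt ik i'k.
  move/(congr1 (fun S => S (P (inord i) (P i' t), z))).
  rewrite /SM_face /comp_gr /=.
  rewrite coface_P; last first.
    by rewrite /= mxE (lift_inord_lt lt) ti ti' if_same addr0.
  rewrite PP_comm // coface_P; last first.
    by rewrite /= mxE (lift_inord_pred lt) ti ti' if_same addr0.
  by move=> ->.
have key2 : forall (t : Delta m.+2) (i i' : 'I_(m.+3)) z, i != i' ->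
    i != k -> i' != k -> val t ord0 i = 0 -> val t ord0 i' = 0 ->
    y i (P i t, z) -> y i' (P i' t, z).
  move=> t i i' z ii' ik i'k ti ti'.
  case: (ssrnat.ltngtP i i') => h.
  - by rewrite (key t i i').
  - by rewrite (key t i' i).
  - by move: ii'; rewrite (val_inj h) eqxx.
pose x := [set p : Delta m.+2 * X | exists i : 'I_(m.+3),
  i != k /\ val (retr k p.1) ord0 i = 0 /\ y i (P i (retr k p.1), p.2)].
exists x; split.
  split.
  - apply: uc_bigcup => i.
    case: (boolP (i != k)) => ik; last first.
      apply: (uc_eq (T2 := set0)); last exact: uc_set0.
      by move=> p; split => // -[h].
    apply: (@uc_eq _ _ _ [set p : Delta m.+2 * X | [set t : Delta m.+2 | val (retr k t) ord0 i = 0] p.1 /\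
        comp_gr (y i) (fun t => P i (retr k t)) p]).
      by move=> p /=; split; [case=> _ [? ?]|case=> ? ?].
    apply: uc_restrict.
      apply: (@closed_pre _ _ (fun t : Delta m.+2 => val (retr k t) ord0 i) [set r : R | r = 0]); last exact: closed_eq.
      apply: (@comp_cont _ _ _ (@retr _ k) (fun u : Delta m.+2 => val u ord0 i)).
        exact: retr_cont.
      exact: cont_coord.
    have [uc _ _] := Sy i ik.
    apply: uc_comp uc.
    apply: (@comp_cont _ _ _ (@retr _ k) (@P _ i)); [exact: retr_cont|exact: P_cont].
  - move=> t; have [i [ik e]] := retr_att k t.
    have [_ sur _] := Sy i ik; have [z hz] := sur (P i (retr k t)).
    by exists z, i.
  - move=> t.
    apply: (@sub_finite_set _ _ (\bigcup_(i in [set i | i != k])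
       [set z | y i (P i (retr k t), z)])).
      by move=> z [i [ik [_ h]]]; exists i.
    apply: bigcup_finite; first exact: finite_finset.
    by move=> i ik; have [_ _ fin] := Sy i ik; exact: fin.
move=> j jk.
apply/funext => -[s z]; rewrite /SM_face /comp_gr /=.
have tj := coface_at j s.
have rt := retr_id jk tj.
apply/propext; split.
  case=> i [ik [e h]]; rewrite rt in e h.
  case: (eqVneq i j) => [eij|ij].
    by rewrite eij P_coface in h.
  by rewrite -(P_coface j s); exact: key2 h.
move=> h; exists j; rewrite rt; split => //; split => //.
by rewrite P_coface.
Qed.
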